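(* For every nonnegative integer $k$ and all integers $i,j\geq 2k+3$, we have $R_k^{\mathcal{SP}}(i,j)=i+j-1$, where $\mathcal{SP}$ is the class of split graphs.
   Context: All graphs are finite and simple. For a graph $G$ and a nonnegative integer $k$, a $k$-sparse $j$-set is a set of $j$ vertices of $G$ inducing a subgraph of maximum degree at most $k$; a $k$-dense $i$-set is a set of $i$ vertices of $G$ that is $k$-sparse in the complement of $G$. For a graph class $\mathcal{G}$, $R_k^{\mathcal{G}}(i,j)$ is the smallest natural number $n$ such that every graph on $n$ vertices in $\mathcal{G}$ has either a $k$-dense $i$-set or a $k$-sparse $j$-set. A split graph is a graph whose vertex set can be partitioned into a clique and an independent set. *)

(* Defs.v *)
From mathcomp Require Import all_boot.
Set Implicit Arguments. Unset Strict Implicit. Unset Printing Implicit Defensive.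

Definition simple_graph (T : finType) (e : rel T) : Prop :=
  symmetric e /\ irreflexive e.

Definition compl_rel (T : finType) (e : rel T) : rel T :=
  fun x y => (x != y) && ~~ e x y.

Definition max_deg_le (T : finType) (e : rel T) (k : nat) (S : {set T}) : bool :=
  [forall v in S, #|[set u in S | e v u]| <= k].

Definition k_sparse_set (T : finType) (e : rel T) (k j : nat) (S : {set T}) : bool :=
  (#|S| == j) && max_deg_le e k S.

Definition k_dense_set (T : finType) (e : rel T) (k i : nat) (S : {set T}) : bool :=
  k_sparse_set (compl_rel e) k i S.

Definition is_split (T : finType) (e : rel T) : Prop :=
  exists C I : {set T},
    [/\ C :&: I = set0, C :|: I = setT,
        (forall x y, x \in C -> y \in C -> x != y -> e x y) &
        (forall x y, x \in I -> y \in I -> ~~ e x y)].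

Definition ramsey_split_prop (k i j n : nat) : Prop :=
  forall e : rel 'I_n, simple_graph e -> is_split e ->
    (exists S : {set 'I_n}, k_dense_set e k i S) \/
    (exists S : {set 'I_n}, k_sparse_set e k j S).

Definition is_R_split (k i j r : nat) : Prop :=
  ramsey_split_prop k i j r /\ (forall n, n < r -> ~ ramsey_split_prop k i j n).

(* Main.v *)
Require Import Defs.
From mathcomp Require Import all_boot.
From mathcomp Require Import zify.

Lemma card_ordP m (P : pred nat) : #|[set u : 'I_m | P u]| = count P (iota 0 m).
Proof.
rewrite -val_enum_ord count_map cardsE cardE /enum_mem size_filter /=.
by rewrite (@eq_filter _ _ predT) // filter_predT.
Qed.

Lemma count_int m a b : b <= m -> a <= b -> count (fun x => a <= x < b) (iota 0 m) = b - a.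
Proof.
move=> hb hab.
have -> : m = a + (b - a) + (m - b) by lia.
rewrite iotaD iotaD !count_cat add0n.
rewrite (eq_in_count (a2:=pred0)); last first.
  move=> x; have {x} [x ->] : exists y : nat, x = y by exists x.
  rewrite mem_iota /= => h. lia.
rewrite (@eq_in_count _ _ predT (iota a (b-a))); last first.
  move=> x; have {x} [x ->] : exists y : nat, x = y by exists x.
  rewrite mem_iota /= subnKC //.
rewrite (eq_in_count (a2:=pred0) (s:= iota (0 + (a + (b-a))) _)); last first.
  move=> x; have {x} [x ->] : exists y : nat, x = y by exists x.
  rewrite mem_iota /= => /andP[h1 h2]; lia.
rewrite !count_pred0 count_predT size_iota; lia.
Qed.

Lemma card_int m a b : b <= m -> a <= b -> #|[set u : 'I_m | a <= u < b]| = b - a.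
Proof. move=> hb hab; rewrite (card_ordP m (fun x => a <= x < b)); exact: count_int. Qed.

Lemma deg_lb m (N : {set 'I_m}) (v : 'I_m) a1 b1 a2 b2 :
  b1 <= m -> b2 <= m -> a1 <= v < b1 -> a2 <= b2 -> (b1 <= a2 \/ b2 <= a1) ->
  (forall u : 'I_m, ((a1 <= u < b1) && (u != v)) || (a2 <= u < b2) -> u \in N) ->
  b1 - a1 - 1 + (b2 - a2) <= #|N|.
Proof.
move=> hb1 hb2 hv hab2 hdis hN.
set A := [set u : 'I_m | a1 <= u < b1] :\ v.
set B := [set u : 'I_m | a2 <= u < b2].
have hA : #|A| = b1 - a1 - 1.
  have := cardsD1 v [set u : 'I_m | a1 <= u < b1].
  rewrite inE hv card_int //; last by lia. rewrite /A; lia.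
have hB : #|B| = b2 - a2 by rewrite card_int.
have hI : A :&: B = set0.
  apply/setP => u; rewrite !inE; apply/negbTE.
  apply/negP => /andP[/andP[_ h1] h2]. move: h1 h2; case: hdis; lia.
have hU : #|A :|: B| = #|A| + #|B| by rewrite cardsU hI cards0 subn0.
rewrite -hA -hB -hU; apply: subset_leq_card; apply/subsetP => u.
rewrite !inE => h; apply: hN; move: h; rewrite andbC; done.
Qed.

Lemma sparse_fact m (e : rel 'I_m) (S : {set 'I_m}) (v : 'I_m) :
  #|[set u | e v u]| - (m - #|S|) <= #|[set u in S | e v u]|.
Proof.
have h : [set u | e v u] \subset [set u in S | e v u] :|: ~: S.
  apply/subsetP => u; rewrite !inE => ->; rewrite andbT; by case: (u \in S).
have h2 := subset_leq_card h.
have h3 := leq_card_setU [set u in S | e v u] (~: S).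
have h4 := cardsC S. rewrite card_ord in h4.
have -> : m - #|S| = #|~: S| by apply/eqP; rewrite -{1}h4 addKn.
rewrite leq_subLR addnC; exact: leq_trans h2 h3.
Qed.

Definition lowv (k i x : nat) := if x < i - 1 then x < k.+1 else x < i - 1 + k.+1.
Definition g (k i x y : nat) : bool :=
  if (x < i - 1) && (y < i - 1) then true
  else if (i - 1 <= x) && (i - 1 <= y) then false
  else lowv k i x != lowv k i y.
Definition ge (k i m : nat) : rel 'I_m := fun x y => (x != y) && g k i x y.

Lemma g_sym k i x y : g k i x y = g k i y x.
Proof.
rewrite /g andbC; case: ifP => // _; rewrite andbC; case: ifP => // _.
by rewrite eq_sym.
Qed.

Lemma ge_simple k i m : simple_graph (ge k i m).
Proof.
split; first by move=> x y; rewrite /ge eq_sym g_sym.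
by move=> x; rewrite /ge eqxx.
Qed.

Lemma ge_split k i m : is_split (ge k i m).
Proof.
exists [set x : 'I_m | x < i - 1], (~: [set x : 'I_m | x < i - 1]).
split; first exact: setICr. exact: setUCr.
  move=> x y; rewrite !inE => hx hy hxy; by rewrite /ge hxy /g hx hy.
move=> x y; rewrite !inE -!leqNgt => hx hy; rewrite /ge /g.
have -> : (x < i - 1) = false by rewrite ltnNge hx.
by rewrite /= hx hy /= andbF.
Qed.

Lemma gCC k i x y : x < i - 1 -> y < i - 1 -> g k i x y.
Proof. by move=> hx hy; rewrite /g hx hy. Qed.

Lemma gII k i x y : i - 1 <= x -> i - 1 <= y -> g k i x y = false.
Proof.
move=> hx hy; rewrite /g hx hy.
have -> : (x < i - 1) = false by lia. done.
Qed.

Lemma gCI k i x y : x < i - 1 -> i - 1 <= y ->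
  g k i x y = ((x < k.+1) != (y < i - 1 + k.+1)).
Proof.
move=> hx hy; rewrite /g /lowv hx /=.
have -> : (y < i - 1) = false by lia.
have -> : (i - 1 <= x) = false by lia. done.
Qed.

Lemma gIC k i x y : i - 1 <= x -> y < i - 1 ->
  g k i x y = ((y < k.+1) != (x < i - 1 + k.+1)).
Proof. by move=> hx hy; rewrite g_sym gCI. Qed.

Lemma no_sparse k i j : 2 * k + 3 <= i -> 2 * k + 3 <= j ->
  ~ exists S, k_sparse_set (ge k i (i + j - 2)) k j S.
Proof.
move=> hi hj [S /andP[/eqP hS /forallP hd]].
set m := i + j - 2.
have [v hvS hv] : exists2 v : 'I_m, v \in S & v < i - 1.
  case: (boolP [exists v in S, v < i - 1]) => [/existsP[v /andP[h1 h2]]|hn].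
    by exists v.
  have hsub : S \subset [set u : 'I_m | i - 1 <= u < m].
    apply/subsetP => u hu; rewrite inE ltn_ord andbT leqNgt.
    apply/negP => hlt; move/negP: hn; apply; apply/existsP; exists u; by rewrite hu.
  have := subset_leq_card hsub; rewrite card_int // ?hS; [lia | rewrite /m; lia].
have hdeg : i + k - 1 <= #|[set u | ge k i m v u]|.
  case: (ltnP v k.+1) => hvk.
    have hN : forall u : 'I_m, ((0 <= u < i - 1) && (u != v)) || (i + k <= u < m) ->
      u \in [set u | ge k i m v u].
      move=> u; rewrite inE /ge => /orP[/andP[hu huv]|/andP[hu1 hu2]].
        by rewrite eq_sym huv gCC.
      have huv : v != u by apply/eqP => hvu; move: hu1; rewrite -hvu; lia.
      have hu4 : (u < i - 1 + k.+1) = false by lia.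
      by rewrite huv gCI ?hvk ?hu4 //; lia.
    have h1 : i - 1 <= m by rewrite /m; lia.
    have h2 : 0 <= v < i - 1 by rewrite hv.
    have h3 : i + k <= m by rewrite /m; lia.
    have h4 : i - 1 <= i + k by lia.
    have := @deg_lb m _ v 0 (i - 1) (i + k) m h1 (leqnn m) h2 h3 (or_introl h4) hN.
    move=> h; apply: leq_trans h; rewrite /m; lia.
  have hN : forall u : 'I_m, ((0 <= u < i - 1) && (u != v)) || (i - 1 <= u < i + k) ->
      u \in [set u | ge k i m v u].
    move=> u; rewrite inE /ge => /orP[/andP[hu huv]|/andP[hu1 hu2]].
      by rewrite eq_sym huv gCC.
    have huv : v != u by apply/eqP => hvu; move: hu1; rewrite -hvu; lia.
    have hu4 : (u < i - 1 + k.+1) = true by lia.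
    have hv4 : (v < k.+1) = false by lia.
    by rewrite huv gCI ?hv4 ?hu4.
  have h1 : i - 1 <= m by rewrite /m; lia.
  have h2 : 0 <= v < i - 1 by rewrite hv.
  have h3 : i + k <= m by rewrite /m; lia.
  have h4 : i - 1 <= i + k by lia.
  have := @deg_lb m _ v 0 (i - 1) (i - 1) (i + k) h1 h3 h2 h4 (or_introl (leqnn _)) hN.
  move=> h; apply: leq_trans h; rewrite /m; lia.
have := @sparse_fact m (ge k i m) S v.
have := implyP (hd v) hvS.
move: hdeg; rewrite hS /m.
move: (#|[set u | ge k i (i+j-2) v u]|) (#|[set u in S | ge k i (i+j-2) v u]|) => a b; lia.
Qed.

Lemma no_dense k i j : 2 * k + 3 <= i -> 2 * k + 3 <= j ->
  ~ exists S, k_dense_set (ge k i (i + j - 2)) k i S.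
Proof.
move=> hi hj [S /andP[/eqP hS /forallP hd]].
set m := i + j - 2.
have [v hvS hv] : exists2 v : 'I_m, v \in S & i - 1 <= v.
  case: (boolP [exists v in S, i - 1 <= v]) => [/existsP[v /andP[h1 h2]]|hn].
    by exists v.
  have hsub : S \subset [set u : 'I_m | 0 <= u < i - 1].
    apply/subsetP => u hu; rewrite inE ltnNge.
    apply/negP => hlt; move/negP: hn; apply; apply/existsP; exists u; by rewrite hu.
  have := subset_leq_card hsub; rewrite card_int // ?hS; [lia | rewrite /m; lia].
have h1 : m <= m by [].
have h2 : i - 1 <= v < m by rewrite hv ltn_ord.
have hdeg : j + k - 1 <= #|[set u | compl_rel (ge k i m) v u]|.
  case: (ltnP v (i - 1 + k.+1)) => hvk.
    have hN : forall u : 'I_m, ((i - 1 <= u < m) && (u != v)) || (0 <= u < k.+1) ->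
      u \in [set u | compl_rel (ge k i m) v u].
      move=> u; rewrite inE /compl_rel /ge => /orP[/andP[hu huv]|/andP[hu1 hu2]].
        rewrite eq_sym huv /= gII //; by case/andP: hu.
      have huv : v != u by apply/eqP => hvu; move: hu2; rewrite -hvu; lia.
      have hu4 : (u < k.+1) = true by lia.
      by rewrite huv /= gIC ?hvk ?hu4 //; lia.
    have h3 : k.+1 <= m by rewrite /m; lia.
    have h4 : k.+1 <= i - 1 by lia.
    have := @deg_lb m _ v (i - 1) m 0 k.+1 h1 h3 h2 (leq0n _) (or_intror h4) hN.
    move=> h; apply: leq_trans h; rewrite /m; lia.
  have hN : forall u : 'I_m, ((i - 1 <= u < m) && (u != v)) || (k.+1 <= u < i - 1) ->
      u \in [set u | compl_rel (ge k i m) v u].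
    move=> u; rewrite inE /compl_rel /ge => /orP[/andP[hu huv]|/andP[hu1 hu2]].
      rewrite eq_sym huv /= gII //; by case/andP: hu.
    have huv : v != u by apply/eqP => hvu; move: hu2; rewrite -hvu; lia.
    have hu4 : (u < k.+1) = false by lia.
    have hv4 : (v < i - 1 + k.+1) = false by lia.
    by rewrite huv /= gIC ?hv4 ?hu4.
  have h3 : i - 1 <= m by rewrite /m; lia.
  have h4 : k.+1 <= i - 1 by lia.
  have := @deg_lb m _ v (i - 1) m k.+1 (i - 1) h1 h3 h2 h4 (or_intror (leqnn _)) hN.
  move=> h; apply: leq_trans h; rewrite /m; lia.
have := @sparse_fact m (compl_rel (ge k i m)) S v.
have := implyP (hd v) hvS.
move: hdeg; rewrite hS /m.
move: (#|[set u | compl_rel (ge k i (i+j-2)) v u]|) (#|[set u in S | compl_rel (ge k i (i+j-2)) v u]|) => a b; lia.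
Qed.

Lemma sparse_transfer (T T' : finType) (f : T' -> T) (e : rel T) (e' : rel T') k s
  (S' : {set T'}) : injective f -> (forall x y, e' x y = e (f x) (f y)) ->
  k_sparse_set e' k s S' -> k_sparse_set e k s (f @: S').
Proof.
move=> finj he /andP[/eqP hc /forallP hd]; apply/andP; split.
  by rewrite card_imset // hc.
apply/forallP => v; apply/implyP => /imsetP[v' hv' ->].
have := implyP (hd v') hv'; apply: leq_trans.
rewrite -(card_imset _ finj); apply: subset_leq_card; apply/subsetP => u.
rewrite inE => /andP[/imsetP[u' hu' ->] h]; apply: imset_f.
by rewrite inE hu' he h.
Qed.

Lemma mono k i j n m : n <= m -> ramsey_split_prop k i j n -> ramsey_split_prop k i j m.
Proof.
move=> hnm H e [hs hirr] [C [I [h1 h2 h3 h4]]].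
pose f := widen_ord hnm.
have finj : injective f by move=> x y /(congr1 val) /= /val_inj.
pose e' := fun x y => e (f x) (f y).
have hs' : simple_graph e'.
  split; first by move=> x y; rewrite /e' hs.
  by move=> x; rewrite /e' hirr.
have hsp' : is_split e'.
  exists (f @^-1: C), (f @^-1: I); split.
  + by rewrite -preimsetI h1 preimset0.
  + rewrite -preimsetU h2; apply/setP => x; by rewrite !inE.
  + move=> x y; rewrite !inE => hx hy hxy; apply: h3 => //; apply: contra hxy => /eqP/finj/eqP.
  + move=> x y; rewrite !inE => hx hy; exact: h4.
case: (H e' hs' hsp') => [[S hS]|[S hS]].
  left; exists (f @: S).
  apply: (@sparse_transfer _ _ f (compl_rel e) (compl_rel e')) hS => // x y.
right; exists (f @: S).
by apply: (@sparse_transfer _ _ f e e') hS.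
Qed.

Lemma subset_card (T : finType) (n : nat) : forall d (A : {set T}), #|A| = n + d ->
  exists2 B : {set T}, B \subset A & #|B| = n.
Proof.
elim=> [|d IH] A hA; first by exists A => //; rewrite hA addn0.
have : A != set0 by rewrite -card_gt0 hA addnS.
case/set0Pn => x hx.
have := cardsD1 x A; rewrite hx hA addnS add1n => [[]] /esym hA'.
have [B hB hBc] := IH _ hA'.
exists B => //; apply: subset_trans hB _; exact: subD1set.
Qed.

Lemma upper k i j : ramsey_split_prop k i j (i + j - 1).
Proof.
move=> e [hs hirr] [C [I [h1 h2 h3 h4]]].
have hc : #|C| + #|I| = i + j - 1.
  have := cardsU C I; rewrite h1 h2 cards0 subn0 cardsT card_ord; lia.
case: (leqP i #|C|) => hC.
  have [S hSC hSc] := @subset_card _ i (#|C| - i) C (esym (subnKC hC)).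
  left; exists S; apply/andP; split; first by apply/eqP.
  apply/forallP => v; apply/implyP => hv.
  rewrite (_ : [set u in S | compl_rel e v u] = set0) ?cards0 //.
  apply/setP => u; rewrite !inE; apply/negbTE; apply/negP => /andP[hu /andP[huv hn]].
  by rewrite h3 ?(subsetP hSC) in hn.
have hI : j <= #|I| by lia.
have [S hSI hSc] := @subset_card _ j (#|I| - j) I (esym (subnKC hI)).
right; exists S; apply/andP; split; first by apply/eqP.
apply/forallP => v; apply/implyP => hv.
rewrite (_ : [set u in S | e v u] = set0) ?cards0 //.
apply/setP => u; rewrite !inE; apply/negbTE; apply/negP => /andP[hu hn].
by rewrite (negbTE (h4 _ _ (subsetP hSI _ hv) (subsetP hSI _ hu))) in hn.
Qed.

Theorem corollary6p1 (k i j : nat) :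
  2 * k + 3 <= i -> 2 * k + 3 <= j -> is_R_split k i j (i + j - 1).
Proof.
move=> hi hj; split; first exact: upper.
move=> n hn Hn.
have hnm : n <= i + j - 2 by lia.
have := @mono k i j n (i + j - 2) hnm Hn (ge k i (i + j - 2)) (ge_simple k i _) (ge_split k i _).
case; [exact: no_dense | exact: no_sparse].
Qed.
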